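(* Consider proportional reinsurance with $I=1$, $m(t,y,u)=p-q+qu$, $\sigma(t,y,u)=\sigma_0u$, $p<q$, $\sigma_0>0$, and the exponential utility $U(x)=-e^{-\beta x}$ with $\beta>0$. Under the ansatz $V(t,x,y)=U(x)\tilde V(t,y)$, the optimal strategy is $(u^*(t,y),a^*(t,y))$ with $$u^*(t,y)=\begin{cases}0,&(t,y)\in A_0,\\ \dfrac{(\sigma_1(t,y)^2+\sigma_2(t,y)^2)q-\mu(t,y)\sigma_0\sigma_1(t,y)}{\sigma_0^2\sigma_2(t,y)^2\beta},&(t,y)\in(A_0\cup A_1)^c,\\ 1,&(t,y)\in A_1,\end{cases}$$ where $A_0=\{(t,y)\in[0,T]\times\mathbb R: q<\frac{\mu(t,y)\sigma_1(t,y)\sigma_0}{\sigma_1(t,y)^2+\sigma_2(t,y)^2}\}$, $A_1=\{(t,y)\in[0,T]\times\mathbb R: q>\frac{\sigma_0[\sigma_2(t,y)^2\sigma_0\beta+\mu(t,y)\sigma_1(t,y)]}{\sigma_1(t,y)^2+\sigma_2(t,y)^2}\}$, and $$a^*(t,y)=\frac{\mu(t,y)-\beta\sigma_0u^*(t,y)\sigma_1(t,y)}{\beta(\sigma_1(t,y)^2+\sigma_2(t,y)^2)}.$$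
   Context: Independent Brownian motions $W^1,W^2,W^Y$; environmental process $dY_t=\mu_Y(t,Y_t)dt+\sigma_Y(t,Y_t)dW^Y_t$ with bounded Lipschitz $C^1$ coefficients; $\mu,\sigma_1,\sigma_2$ bounded continuous positive Lipschitz functions of $(t,y)$ with $\sigma_1+\sigma_2$ bounded away from zero. With retention $u_t\in[0,1]$ and amount $a_t$ invested in the risky asset, the surplus is $dX_t=\{m(t,Y_t,u_t)+a_t\mu(t,Y_t)\}dt+\{\sigma(t,Y_t,u_t)+a_t\sigma_1(t,Y_t)\}dW^1_t+a_t\sigma_2(t,Y_t)dW^2_t$, and the insurer maximises $\mathbb E[U(X_T)]$ over adapted strategies with $\mathbb E\int_0^Ta_t^2dt<\infty$; $V(t,x,y)$ denotes the value function with HJB equation $0=V_t+\sup_{u,a}[\{m+a\mu\}V_x+\frac12\{(\sigma+a\sigma_1)^2+a^2\sigma_2^2\}V_{xx}]+\mu_YV_y+\frac12\sigma_Y^2V_{yy}$. The optimal strategy here means the maximiser in this HJB equation under the ansatz $V(t,x,y)=U(x)\tilde V(t,y)$ for some function $\tilde V$. *)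

(* Defs.v *)
From HB Require Import structures.
From mathcomp Require Import all_boot all_order all_algebra.
From mathcomp Require Import all_classical all_reals all_analysis.
Set Implicit Arguments. Unset Strict Implicit. Unset Printing Implicit Defensive.
Import Order.TTheory GRing.Theory Num.Theory.
Import numFieldNormedType.Exports.
Local Open Scope ring_scope.

Section Defs.
Variable R : realType.

Definition expU (beta x : R) : R := - expR (- (beta * x)).

Definition bdd_pos_lip (f : R -> R -> R) : Prop :=
  (exists M : R, forall t y, `|f t y| <= M) /\
  (forall t y, 0 < f t y) /\
  (exists L : R, forall t y t' y',
      `|f t y - f t' y'| <= L * (`|t - t'| + `|y - y'|)).

(* The expression maximised in the HJB equation, at a point where
   V_x = Vx and V_xx = Vxx and the coefficients are frozen at (t,y):
   {m(u) + a mu} V_x + 1/2 {(sigma(u) + a sigma1)^2 + a^2 sigma2^2} V_xx *)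
Definition hjb_hamiltonian (m sig : R -> R) (mu s1 s2 Vx Vxx u a : R) : R :=
  (m u + a * mu) * Vx
  + 2^-1 * ((sig u + a * s1) ^+ 2 + a ^+ 2 * s2 ^+ 2) * Vxx.

Definition inA0 (q sigma0 mu s1 s2 : R) : bool :=
  q < mu * s1 * sigma0 / (s1 ^+ 2 + s2 ^+ 2).
Definition inA1 (q sigma0 beta mu s1 s2 : R) : bool :=
  q > sigma0 * (s2 ^+ 2 * sigma0 * beta + mu * s1) / (s1 ^+ 2 + s2 ^+ 2).

Definition ustar (q sigma0 beta mu s1 s2 : R) : R :=
  if inA0 q sigma0 mu s1 s2 then 0
  else if inA1 q sigma0 beta mu s1 s2 then 1
  else ((s1 ^+ 2 + s2 ^+ 2) * q - mu * sigma0 * s1)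
        / (sigma0 ^+ 2 * s2 ^+ 2 * beta).

Definition astar (q sigma0 beta mu s1 s2 : R) : R :=
  (mu - beta * sigma0 * ustar q sigma0 beta mu s1 s2 * s1)
  / (beta * (s1 ^+ 2 + s2 ^+ 2)).

End Defs.

(* Main.v *)
Require Import Defs.
From HB Require Import structures.
From mathcomp Require Import all_boot all_order all_algebra.
From mathcomp Require Import all_classical all_reals all_analysis.
Import Order.TTheory GRing.Theory Num.Theory.
Import numFieldNormedType.Exports.
Local Open Scope ring_scope.
From mathcomp Require Import ring lra.

Lemma dlin (R : realType) (k z : R) : is_derive z 1 (fun x : R => k * x) k.
Proof.
apply: is_derive_eq. by rewrite -[RHS]mulr1.
Qed.

Lemma dexpk (R : realType) (c k z : R) :
  is_derive z 1 (fun x => c * expR (k * x)) (c * (k * expR (k * z))).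
Proof.
apply: is_derive_eq. have -> : k%:A = k by rewrite -[RHS]mulr1.
change (c * (expR (k * z) * k) = c * (k * expR (k * z))).
by rewrite [expR _ * k]mulrC.
Qed.

Arguments dexpk {R}.
Lemma dexpk1 (R : realType) (c k : R) :
  derive1 (fun x => c * expR (k * x)) = (fun z => c * (k * expR (k * z))).
Proof.
apply/funext => z; rewrite derive1E.
have h := dexpk c k z. by rewrite derive_val.
Qed.

Lemma ucase (R : realFieldType) (u0 us u : R) :
  (us = 0 /\ u0 < 0) \/ (us = 1 /\ 1 < u0) \/ (us = u0 /\ 0 <= u0 <= 1) ->
  0 <= u <= 1 ->
  0 <= (u - u0) ^+ 2 - (us - u0) ^+ 2 /\
  ((u - u0) ^+ 2 - (us - u0) ^+ 2 = 0 -> u = us).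
Proof.
move=> [[-> h]|[[-> h]|[-> h]]] /andP[u0' u1].
- have -> : (u - u0) ^+ 2 - (0 - u0) ^+ 2 = u * (u - 2 * u0) by ring.
  split; first by nra.
  move/eqP; rewrite mulf_eq0 => /orP[/eqP //|/eqP]; lra.
- have -> : (u - u0) ^+ 2 - (1 - u0) ^+ 2 = (u - 1) * (u + 1 - 2 * u0) by ring.
  split; first by nra.
  move/eqP; rewrite mulf_eq0 => /orP[/eqP|/eqP]; lra.
- have -> : (u0 - u0) ^+ 2 = 0 by rewrite subrr expr0n.
  rewrite subr0; split; first exact: sqr_ge0.
  by move/eqP; rewrite sqrf_eq0 subr_eq0 => /eqP.
Qed.

Arguments dlin {R}.
Arguments dexpk {R}.
Arguments dexpk1 {R}.
Arguments ucase {R u0 us u}.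

Theorem corollary5p3 (R : realType) (T : R) (mu sigma1 sigma2 : R -> R -> R)
    (p q sigma0 beta : R) (Vt : R -> R -> R) :
  0 < T ->
  bdd_pos_lip mu -> bdd_pos_lip sigma1 -> bdd_pos_lip sigma2 ->
  (exists c : R, 0 < c /\ forall t y, c <= sigma1 t y + sigma2 t y) ->
  p < q -> 0 < sigma0 -> 0 < beta ->
  forall t y x : R, 0 <= t <= T -> 0 < Vt t y ->
  let V : R -> R := fun x' => expU beta x' * Vt t y in
  let m : R -> R := fun u => p - q + q * u in
  let sig : R -> R := fun u => sigma0 * u in
  let H : R -> R -> R := fun u a =>
    hjb_hamiltonian m sig (mu t y) (sigma1 t y) (sigma2 t y)
      (derive1 V x) (derive1n 2 V x) u a in
  let us := ustar q sigma0 beta (mu t y) (sigma1 t y) (sigma2 t y) in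
  let as_ := astar q sigma0 beta (mu t y) (sigma1 t y) (sigma2 t y) in
  [/\ 0 <= us <= 1,
      (forall u a : R, 0 <= u <= 1 -> H u a <= H us as_) &
      (forall u a : R, 0 <= u <= 1 -> H u a = H us as_ -> u = us /\ a = as_)].
Proof.
move=> hT hmu hs1 hs2 hc hpq hs0 hb t y x ht hV V m sig H us as_.
have mu0 := hmu.2.1 t y; have s10 := hs1.2.1 t y; have s20 := hs2.2.1 t y.
set C := Vt t y.
have hVeq : V = fun z => (- C) * expR ((- beta) * z).
  apply/funext => z; rewrite /V /expU [(- beta) * z]mulNr /C; ring.
have dV : derive1 V = fun z => (- C) * ((- beta) * expR ((- beta) * z)).
  by rewrite hVeq dexpk1.
have d2V : derive1n 2 V = fun z => (C * beta) * ((- beta) * expR ((- beta) * z)).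
  have -> : derive1n 2 V = derive1 (derive1 V) by [].
  rewrite dV.
  have -> : (fun z => (- C) * ((- beta) * expR ((- beta) * z))) =
            (fun z => (C * beta) * expR ((- beta) * z)).
    by apply/funext => z; ring.
  by rewrite dexpk1.
set e := expR ((- beta) * x).
have he : 0 < e by rewrite /e expR_gt0.
set D := C * beta * e.
have hD : 0 < D by rewrite /D !mulr_gt0.
set M := mu t y in mu0 us as_ H *; set s1 := sigma1 t y in s10 us as_ H *;
set s2 := sigma2 t y in s20 us as_ H *.
set S := s1 ^+ 2 + s2 ^+ 2.
have hS : 0 < S by rewrite /S; apply: addr_gt0; apply: exprn_gt0.
pose A w := (M - beta * sigma0 * w * s1) / (beta * S).
pose Dn := sigma0 ^+ 2 * s2 ^+ 2 * beta.
have hDn : 0 < Dn by rewrite /Dn !mulr_gt0 // exprn_gt0.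
pose u0 := (S * q - M * sigma0 * s1) / Dn.
pose k := beta * sigma0 ^+ 2 * s2 ^+ 2 / (2 * S).
have hk : 0 < k by rewrite /k; apply: divr_gt0; rewrite ?mulr_gt0 ?exprn_gt0.
have key : forall u a w, H w (A w) - H u a =
    D * (beta / 2 * S * (a - A u) ^+ 2 + k * ((u - u0) ^+ 2 - (w - u0) ^+ 2)).
  move=> u a w.
  rewrite /H /hjb_hamiltonian dV d2V /m /sig -/e /A /u0 /k /D /Dn.
  rewrite /S; field.
  by rewrite (gt_eqF hb) (gt_eqF s20) (gt_eqF hs0) (gt_eqF hS).
have hasA : as_ = A us by [].
have hus : (us = 0 /\ u0 < 0) \/ (us = 1 /\ 1 < u0) \/ (us = u0 /\ 0 <= u0 <= 1).
  have e0 : inA0 q sigma0 M s1 s2 = (u0 < 0).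
    rewrite /inA0 /u0 ltr_pdivlMr // ltr_pdivrMr // mul0r.
    rewrite /S; by apply/idP/idP => h; lra.
  have e1 : inA1 q sigma0 beta M s1 s2 = (1 < u0).
    rewrite /inA1 /u0 ltr_pdivlMr // ltr_pdivrMr // mul1r /Dn.
    rewrite /S; by apply/idP/idP => h; lra.
  rewrite /us /ustar e0 e1.
  case: ifP => h0; first by left.
  case: ifP => h1; first by right; left.
  right; right; split => //.
  by rewrite !leNgt h0 h1.
have us01 : 0 <= us <= 1.
  by case: hus => [[-> _]|[[-> _]|[-> /andP[]]]] //; rewrite ?lexx ?ler01 // => -> ->.
split => //.
- move=> u a hu.
  have [h1 _] := ucase hus hu.
  rewrite -subr_ge0 hasA key.
  apply: mulr_ge0; first exact: ltW.
  apply: addr_ge0; last by apply: mulr_ge0 => //; exact: ltW.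
  apply: mulr_ge0; last exact: sqr_ge0.
  apply: mulr_ge0 => //; last exact: ltW.
  by apply: divr_ge0 => //; exact: ltW.
- move=> u a hu heq.
  have [h1 h2] := ucase hus hu.
  have := key u a us; rewrite -hasA -heq subrr => /esym /eqP.
  rewrite mulf_eq0 gt_eqF //= paddr_eq0.
  + move/andP => [ea eu].
    have huu : u = us.
      by apply: h2; move: eu; rewrite mulf_eq0 (gt_eqF hk) /= => /eqP.
    split => //.
    have hpos : 0 < beta / 2 * S by apply: mulr_gt0 => //; apply: divr_gt0.
    move: ea; rewrite mulf_eq0 (gt_eqF hpos) /= sqrf_eq0 subr_eq0 => /eqP ->.
    by rewrite hasA huu.
  + apply: mulr_ge0; last exact: sqr_ge0.
    apply: mulr_ge0 => //; last exact: ltW.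
    by apply: divr_ge0 => //; exact: ltW.
  + by apply: mulr_ge0 => //; exact: ltW.
Qed.
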